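(* Let $f:G\to H$ be an epimorphism of finitely generated groups. Then the induced epimorphism $f_{RF}:RF(G)\to RF(H)$ is an isomorphism if and only if the induced epimorphism $f_{na}:RF_{na}(G)\to RF_{na}(H)$ is an isomorphism and $b_1(G)=b_1(H)$.
   Context: $\mathbb F$ denotes a non-abelian free group. $RF(G)$ is the quotient of $G$ by the intersection of the kernels of all homomorphisms $G\to\mathbb F$; $RF_{na}(G)$ is the quotient of $G$ by the intersection of the kernels of all homomorphisms $G\to\mathbb F$ with non-abelian image. An epimorphism $f:G\to H$ induces epimorphisms $RF(G)\to RF(H)$ and $RF_{na}(G)\to RF_{na}(H)$. $b_1(G)$ is the torsion-free rank of $H_1(G,\mathbb Z)$. *)

(* Defs.v *)
From Stdlib Require Import ZArith List.
Import ListNotations.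
Set Implicit Arguments.

Record group := Group {
  carrier :> Type;
  gmul : carrier -> carrier -> carrier;
  gone : carrier;
  ginv : carrier -> carrier;
  gmulA : forall x y z, gmul x (gmul y z) = gmul (gmul x y) z;
  gmul1l : forall x, gmul gone x = x;
  gmul1r : forall x, gmul x gone = x;
  gmulVl : forall x, gmul (ginv x) x = gone;
  gmulVr : forall x, gmul x (ginv x) = gone
}.
Arguments gmul {g}.
Arguments gone {g}.
Arguments ginv {g}.

Definition is_hom {G H : group} (f : G -> H) : Prop :=
  forall x y : G, f (gmul x y) = gmul (f x) (f y).

Definition surjective {G H : group} (f : G -> H) : Prop :=
  forall h : H, exists g : G, f g = h.

Definition is_epi {G H : group} (f : G -> H) : Prop := is_hom f /\ surjective f.

Inductive generated {G : group} (S : list G) : G -> Prop :=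
| gen_mem : forall x, In x S -> generated S x
| gen_one : generated S gone
| gen_mul : forall x y, generated S x -> generated S y -> generated S (gmul x y)
| gen_inv : forall x, generated S x -> generated S (ginv x).

Definition fin_gen (G : group) : Prop :=
  exists S : list G, forall x : G, generated S x.

Definition free_on {F : group} {X : Type} (b : X -> F) : Prop :=
  forall (K : group) (k : X -> K),
    exists phi : F -> K, is_hom phi /\ (forall x, phi (b x) = k x) /\
      (forall psi : F -> K, is_hom psi -> (forall x, psi (b x) = k x) ->
         forall y, psi y = phi y).

Definition nonabelian_free (F : group) : Prop :=
  (exists (X : Type) (b : X -> F), free_on b) /\
  (exists x y : F, gmul x y <> gmul y x).

(** RF(G) = G / N where N = intersection of kernels of all
    homomorphisms G -> F; two elements are identified in RF(G) iff every such
    homomorphism agrees on them.  Likewise for RF_na with homomorphisms of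
    non-abelian image. *)
Definition nonabelian_image {G F : group} (phi : G -> F) : Prop :=
  exists x y : G, gmul (phi x) (phi y) <> gmul (phi y) (phi x).

Definition RF_rel (F G : group) (x y : G) : Prop :=
  forall phi : G -> F, is_hom phi -> phi x = phi y.

Definition RFna_rel (F G : group) (x y : G) : Prop :=
  forall phi : G -> F, is_hom phi -> nonabelian_image phi -> phi x = phi y.

(** The map induced by f : G -> H on quotients G/~G -> H/~H (sending the class
    of g to the class of f g) is a bijection of the quotients, i.e. (being a
    homomorphism of quotient groups) an isomorphism. *)
Definition induced_bij {G H : group} (RG : G -> G -> Prop) (RH : H -> H -> Prop)
  (f : G -> H) : Prop :=
  (forall x y : G, RH (f x) (f y) -> RG x y) /\
  (forall h : H, exists g : G, RH (f g) h).

Definition fRF_iso (F : group) {G H : group} (f : G -> H) : Prop :=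
  induced_bij (@RF_rel F G) (@RF_rel F H) f.

Definition fna_iso (F : group) {G H : group} (f : G -> H) : Prop :=
  induced_bij (@RFna_rel F G) (@RFna_rel F H) f.

(** First Betti number: torsion-free rank of H_1(G,Z) = G/[G,G]. *)
Inductive comm_sub {G : group} : G -> Prop :=
| cs_comm : forall x y : G,
    comm_sub (gmul (gmul (ginv x) (ginv y)) (gmul x y))
| cs_one : comm_sub gone
| cs_mul : forall x y, comm_sub x -> comm_sub y -> comm_sub (gmul x y)
| cs_inv : forall x, comm_sub x -> comm_sub (ginv x).

Fixpoint npow {G : group} (g : G) (n : nat) : G :=
  match n with O => gone | S m => gmul g (npow g m) end.

Definition zpow {G : group} (g : G) (z : Z) : G :=
  match z with
  | Z0 => gone
  | Zpos p => npow g (Pos.to_nat p)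
  | Zneg p => ginv (npow g (Pos.to_nat p))
  end.

Fixpoint lin_comb {G : group} (gs : list G) (ns : list Z) : G :=
  match gs, ns with
  | g :: gs', n :: ns' => gmul (zpow g n) (lin_comb gs' ns')
  | _, _ => gone
  end.

(** the images of gs in H_1(G,Z) are Z-linearly independent *)
Definition ab_independent {G : group} (gs : list G) : Prop :=
  forall ns : list Z, length ns = length gs ->
    comm_sub (lin_comb gs ns) -> Forall (fun n => n = 0%Z) ns.

Definition is_b1 (G : group) (k : nat) : Prop :=
  (exists gs : list G, length gs = k /\ ab_independent gs) /\
  (forall gs : list G, ab_independent gs -> length gs <= k).

(* Main.v *)
Require Import Defs.
From Stdlib Require Import ZArith List.
From Stdlib Require Import Lia Classical ClassicalEpsilon FunctionalExtensionality PropExtensionality ProofIrrelevance.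
From HB Require Import structures.
From mathcomp Require Import all_boot all_order all_algebra.
Set Implicit Arguments. Unset Strict Implicit. Unset Printing Implicit Defensive.

Module M1.

Section GroupLemmas.
Variable G : group.
Implicit Types x y z : G.

Lemma gmulKg x y : gmul (ginv x) (gmul x y) = y.
Proof. by rewrite gmulA gmulVl gmul1l. Qed.
Lemma gmulKVg x y : gmul x (gmul (ginv x) y) = y.
Proof. by rewrite gmulA gmulVr gmul1l. Qed.
Lemma gmulgK x y : gmul (gmul y x) (ginv x) = y.
Proof. by rewrite -gmulA gmulVr gmul1r. Qed.
Lemma gmulgKV x y : gmul (gmul y (ginv x)) x = y.
Proof. by rewrite -gmulA gmulVl gmul1r. Qed.
Lemma gmulIg x y z : gmul x y = gmul x z -> y = z.
Proof. by move=> h; rewrite -(gmulKg x y) h gmulKg. Qed.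
Lemma gmulgI x y z : gmul y x = gmul z x -> y = z.
Proof. by move=> h; rewrite -(gmulgK x y) h gmulgK. Qed.
Lemma ginvK x : ginv (ginv x) = x.
Proof. by apply: (@gmulIg (ginv x)); rewrite gmulVr gmulVl. Qed.
Lemma ginvM x y : ginv (gmul x y) = gmul (ginv y) (ginv x).
Proof. by apply: (@gmulIg (gmul x y)); rewrite gmulVr -gmulA gmulKVg gmulVr. Qed.
Lemma ginv1 : ginv (gone : G) = gone.
Proof. by apply: (@gmulIg gone); rewrite gmulVr gmul1l. Qed.
Lemma ginv_uniq x y : gmul x y = gone -> y = ginv x.
Proof. by move=> h; apply: (@gmulIg x); rewrite h gmulVr. Qed.
Lemma ginv_eq1 x : ginv x = gone -> x = gone.
Proof. by move=> h; rewrite -(ginvK x) h ginv1. Qed.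

Lemma npowS x n : npow x n.+1 = gmul x (npow x n). Proof. by []. Qed.
Lemma npowSr x n : npow x n.+1 = gmul (npow x n) x.
Proof. elim: n => [|n IH]; first by rewrite /= gmul1r gmul1l. by rewrite [LHS]npowS {1}IH gmulA. Qed.
Lemma npow_add x m n : npow x (m + n) = gmul (npow x m) (npow x n).
Proof. elim: m => [|m IH] /=; first by rewrite gmul1l. by rewrite IH gmulA. Qed.
Lemma npow1 n : npow (gone : G) n = gone.
Proof. by elim: n => //= n ->; rewrite gmul1l. Qed.
Lemma npow_inv x n : npow (ginv x) n = ginv (npow x n).
Proof. elim: n => [|n IH] /=; first by rewrite ginv1. by rewrite IH -ginvM -npowSr. Qed.
Lemma npow_mul x m n : npow x (m * n) = npow (npow x m) n.
Proof. elim: n => [|n IH]; first by rewrite muln0. by rewrite mulnS npow_add IH. Qed.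
End GroupLemmas.

Section Homs.
Variables G H : group.
Variable f : G -> H.
Hypothesis hf : is_hom f.
Lemma hom1 : f gone = gone.
Proof. by apply: (@gmulIg _ (f gone)); rewrite -hf !gmul1r. Qed.
Lemma homV x : f (ginv x) = ginv (f x).
Proof. by apply: ginv_uniq; rewrite -hf gmulVr hom1. Qed.
Lemma hom_npow x n : f (npow x n) = npow (f x) n.
Proof. by elim: n => [|n IH] /=; [exact: hom1| rewrite hf IH]. Qed.
Lemma hom_zpow x z : f (zpow x z) = zpow (f x) z.
Proof. by case: z => [|p|p] /=; rewrite ?hom1 ?homV ?hom_npow. Qed.
Lemma hom_lin_comb gs ns : f (lin_comb gs ns) = lin_comb (map f gs) ns.
Proof.
elim: gs ns => [|g gs IH] [|n ns] /=; rewrite ?hom1 //.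
by rewrite hf hom_zpow IH.
Qed.
Lemma hom_comm_sub x : comm_sub x -> comm_sub (f x).
Proof.
elim=> [a b||a b _ IHa _ IHb|a _ IHa].
- by rewrite !hf !homV; apply: cs_comm.
- by rewrite hom1; apply: cs_one.
- by rewrite hf; apply: cs_mul.
- by rewrite homV; apply: cs_inv.
Qed.
End Homs.

End M1.
Import M1.

Module M2.
Import GRing.Theory.

Section CommSub.
Variable G : group.
Implicit Types x y z a b : G.

Lemma cs_conj x g : comm_sub x -> comm_sub (gmul (gmul (ginv g) x) g).
Proof.
move=> hx.
have -> : gmul (gmul (ginv g) x) g =
   gmul x (gmul (gmul (ginv x) (ginv g)) (gmul x g)).
  by rewrite gmulA [gmul x (gmul (ginv x) _)]gmulKVg gmulA.
by apply: cs_mul => //; apply: cs_comm.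
Qed.

Lemma cs_invE x : comm_sub (ginv x) -> comm_sub x.
Proof. by move=> h; rewrite -(ginvK x); apply: cs_inv. Qed.

Definition eqab x y := comm_sub (gmul (ginv x) y).

Lemma eqab_refl x : eqab x x.
Proof. rewrite /eqab gmulVl; exact: cs_one. Qed.
Lemma eqab_sym x y : eqab x y -> eqab y x.
Proof. by rewrite /eqab => h; have := cs_inv h; rewrite ginvM ginvK. Qed.
Lemma eqab_trans x y z : eqab x y -> eqab y z -> eqab x z.
Proof.
rewrite /eqab => h1 h2; have := cs_mul h1 h2.
by rewrite -gmulA gmulKVg.
Qed.
Lemma eqab_mul a a' b b' : eqab a a' -> eqab b b' -> eqab (gmul a b) (gmul a' b').
Proof.
rewrite /eqab => h1 h2.
have := cs_mul (cs_conj b h1) h2.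
by rewrite ginvM -!gmulA gmulKVg.
Qed.
Lemma eqab_inv a a' : eqab a a' -> eqab (ginv a) (ginv a').
Proof.
rewrite /eqab => h.
have := cs_conj (ginv a) (cs_inv h).
by rewrite !ginvK ginvM !ginvK -!gmulA gmulVr gmul1r.
Qed.
Lemma eqab_comm x y : eqab (gmul x y) (gmul y x).
Proof. by rewrite /eqab ginvM; apply: cs_comm. Qed.
End CommSub.

Definition cldec (P : Prop) : bool :=
  if excluded_middle_informative P then true else false.
Lemma cldecP (P : Prop) : reflect P (cldec P).
Proof. by rewrite /cldec; case: excluded_middle_informative => h; constructor. Qed.

Definition cfind (T : Type) (P : pred T) (n : nat) : option T :=
  match excluded_middle_informative (exists x, P x) with
  | left h => Some (proj1_sig (constructive_indefinite_description _ h))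
  | right _ => None
  end.

Lemma cfind_correct T (P : pred T) n x : cfind P n = Some x -> P x.
Proof.
rewrite /cfind; case: excluded_middle_informative => // h [<-].
exact: proj2_sig (constructive_indefinite_description _ h).
Qed.
Lemma cfind_complete T (P : pred T) : (exists x, P x) -> exists n, cfind P n.
Proof. by move=> h; exists 0; rewrite /cfind; case: excluded_middle_informative. Qed.
Lemma cfind_ext T (P Q : pred T) : P =1 Q -> cfind P =1 cfind Q.
Proof. by move=> h n; have -> : P = Q by apply: functional_extensionality. Qed.

Section Ab.
Variable G : group.
Definition canon (x : G) : G := epsilon (inhabits x) (fun y => eqab x y).
Lemma canon_spec x : eqab x (canon x).
Proof. by apply: (epsilon_spec (inhabits x) (fun y => eqab x y)); exists x; apply: eqab_refl. Qed.
Lemma canon_eq x y : eqab x y -> canon x = canon y.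
Proof.
move=> h; rewrite /canon.
have -> : (fun z => eqab x z) = (fun z => eqab y z).
  apply: functional_extensionality => z; apply: propositional_extensionality; split.
  - by apply: eqab_trans; apply: eqab_sym.
  - by apply: eqab_trans.
have -> : inhabits x = inhabits y by apply: proof_irrelevance.
by [].
Qed.
Lemma canon_idem x : canon (canon x) = canon x.
Proof. by apply: canon_eq; apply: eqab_sym; apply: canon_spec. Qed.
End Ab.

Definition Ab (G : group) := {x : G | canon x = x}.

HB.instance Definition _ G := hasDecEq.Build (Ab G) (fun x y => (cldecP (x = y))).
HB.instance Definition _ G := hasChoice.Build (Ab G) (@cfind_correct (Ab G)) (@cfind_complete (Ab G)) (@cfind_ext (Ab G)).

Section AbOps.
Variable G : group.
Definition mkA (x : G) : Ab G := exist _ (canon x) (canon_idem x).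
Lemma Ab_ext (a b : Ab G) : proj1_sig a = proj1_sig b -> a = b.
Proof.
case: a => a ha; case: b => b hb /= e; subst b.
by rewrite (proof_irrelevance _ ha hb).
Qed.
Lemma mkA_eq x y : eqab x y -> mkA x = mkA y.
Proof. by move=> h; apply: Ab_ext => /=; apply: canon_eq. Qed.
Lemma mkA_inj x y : mkA x = mkA y -> eqab x y.
Proof.
move=> h; have e : canon x = canon y by have := f_equal (@proj1_sig _ _) h.
apply: (eqab_trans (canon_spec x)); rewrite e; apply: eqab_sym; exact: canon_spec.
Qed.
Lemma valK (a : Ab G) : mkA (proj1_sig a) = a.
Proof. by apply: Ab_ext; case: a. Qed.
Definition Azero : Ab G := mkA gone.
Definition Aadd (a b : Ab G) : Ab G := mkA (gmul (proj1_sig a) (proj1_sig b)).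
Definition Aopp (a : Ab G) : Ab G := mkA (ginv (proj1_sig a)).
Lemma Aadd_mk x y : Aadd (mkA x) (mkA y) = mkA (gmul x y).
Proof. by apply: mkA_eq; apply: eqab_mul; apply: eqab_sym; apply: canon_spec. Qed.
Lemma Aopp_mk x : Aopp (mkA x) = mkA (ginv x).
Proof. by apply: mkA_eq; apply: eqab_inv; apply: eqab_sym; apply: canon_spec. Qed.
Lemma AaddA : associative Aadd.
Proof. by move=> a b c; rewrite -[a]valK -[b]valK -[c]valK !Aadd_mk gmulA. Qed.
Lemma AaddC : commutative Aadd.
Proof. by move=> a b; rewrite -[a]valK -[b]valK !Aadd_mk; apply: mkA_eq; apply: eqab_comm. Qed.
Lemma Aadd0 : left_id Azero Aadd.
Proof. by move=> a; rewrite -[a]valK /Azero Aadd_mk gmul1l. Qed.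
Lemma AaddN : left_inverse Azero Aopp Aadd.
Proof. by move=> a; rewrite -[a]valK Aopp_mk Aadd_mk gmulVl. Qed.
End AbOps.

HB.instance Definition _ G := GRing.isZmodule.Build (Ab G) (@AaddA G) (@AaddC G) (@Aadd0 G) (@AaddN G).

Section Pi.
Variable G : group.
Local Open Scope ring_scope.
Definition pab (x : G) : Ab G := mkA x.
Lemma pabM x y : pab (gmul x y) = pab x + pab y.
Proof. by rewrite /pab -Aadd_mk. Qed.
Lemma pab1 : pab (gone : G) = 0. Proof. by []. Qed.
Lemma pabV x : pab (ginv x) = - pab x.
Proof. by rewrite /pab -Aopp_mk. Qed.
Lemma pab_surj (a : Ab G) : exists x, pab x = a.
Proof. by exists (proj1_sig a); apply: valK. Qed.
Lemma pab_eq0 x : pab x = 0 <-> comm_sub x.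
Proof.
split.
- move=> /mkA_inj; rewrite /eqab gmul1r => h; exact: cs_invE.
- move=> h; apply: mkA_eq; rewrite /eqab gmul1r; exact: cs_inv.
Qed.
Lemma pab_npow x n : pab (npow x n) = pab x *+ n.
Proof. by elim: n => [|n IH] //=; rewrite pabM IH mulrS. Qed.
End Pi.

Definition Z2i (z : Z) : int :=
  match z with
  | Z0 => 0%R
  | Zpos p => Posz (Pos.to_nat p)
  | Zneg p => (- Posz (Pos.to_nat p))%R
  end.
Definition i2Z (i : int) : Z :=
  match i with
  | Posz n => Z.of_nat n
  | Negz n => Z.opp (Z.of_nat n.+1)
  end.
Lemma Z2iK i : Z2i (i2Z i) = i.
Proof.
case: i => [[|n]|n] //=.
- by rewrite SuccNat2Pos.id_succ.
- by rewrite SuccNat2Pos.id_succ NegzE.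
Qed.
Lemma Z2i_eq0 z : Z2i z = 0%R -> z = Z0.
Proof.
case: z => [|p|p] //= h.
- by case: h => e; move: (Pos2Nat.is_pos p); rewrite e => /Nat.lt_irrefl.
- by move/eqP: h; rewrite oppr_eq0 => /eqP [e]; move: (Pos2Nat.is_pos p); rewrite e => /Nat.lt_irrefl.
Qed.

Lemma pab_zpow (G : group) (x : G) z : pab (zpow x z) = (pab x *~ Z2i z)%R.
Proof.
case: z => [|p|p] /=; first by rewrite mulr0z.
- by rewrite pab_npow.
- by rewrite pabV pab_npow mulrNz.
Qed.

End M2.
Import M2.

Module M3.
Import GRing.Theory.
Local Open Scope ring_scope.

Lemma sum_bump (R : nmodType) k p (F : nat -> R) : (p < k.+1)%N ->
  \sum_(i < k.+1) F i = F p + \sum_(i < k) F (bump p i).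
Proof.
move=> hp; rewrite (bigD1_ord (Ordinal hp) (P := xpredT)) //=.
Qed.

Lemma LA1 n : forall k (V : nat -> nat -> int), (n < k)%N ->
  exists c : nat -> int, (exists i, (i < k)%N /\ c i != 0) /\
    forall j, (j < n)%N -> \sum_(i < k) c i * V i j = 0.
Proof.
elim: n => [|n IH] k V hk.
  by exists (fun _ => 1); split => //; exists 0%N; split.
case: (classic (forall i, (i < k)%N -> V i 0%N = 0)) => [h0|].
  have [c [hc hs]] := IH k (fun i j => V i j.+1) (ltnW hk).
  exists c; split => // -[|j] hj.
    by rewrite big1 // => i _; rewrite h0 ?mulr0.
  exact: hs.
move=> hn; have [p hp'] := not_all_ex_not _ _ hn; have [hp hVp] := imply_to_and _ _ hp'.
move/eqP: hVp => hVp.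
clear hn hp'; case: k hk hp => [//|k] hk hp.
pose h i := V i 0%N.
pose W i j := h p * V (bump p i) j.+1 - h (bump p i) * V p j.+1.
have [d [[i0 [hi0 hd0]] hd]] := IH k W hk.
pose c i := if i == p then - \sum_(i' < k) d i' * h (bump p i') else d (unbump p i) * h p.
have cb i : c (bump p i) = d i * h p.
  by rewrite /c eq_sym (negbTE (neq_bump p i)) bumpK.
exists c; split.
  exists (bump p i0); split; first by apply: (@leq_ltn_trans i0.+1); [rewrite /bump; case: (p <= i0)%N | rewrite ltnS].
  by rewrite cb mulf_neq0.
move=> [|j] hj.
  rewrite (sum_bump (fun i => c i * V i 0%N) hp) /= {1}/c eqxx.
  under eq_bigr => i _ do rewrite cb.
  rewrite mulNr mulr_suml -sumrN -big_split /= big1 // => i _.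
  by rewrite /h -mulrA [V (bump p i) 0%N * _]mulrC mulrA addNr.
rewrite (sum_bump (fun i => c i * V i j.+1) hp) /= {1}/c eqxx.
under eq_bigr => i _ do rewrite cb.
rewrite -[RHS](hd j hj) mulNr mulr_suml -sumrN -big_split /=; apply: eq_bigr => i _.
by rewrite /W mulrBr addrC !mulrA.
Qed.

Section Indep.
Variable A : zmodType.
Definition comb k (x : nat -> A) (c : nat -> int) : A := \sum_(i < k) x i *~ c i.
Definition indep k (x : nat -> A) :=
  forall c, comb k x c = 0 -> forall i, (i < k)%N -> c i = 0.
Definition gens n (e : nat -> A) := forall y, exists v, y = comb n e v.

Lemma combD k x c c' : comb k x c + comb k x c' = comb k x (fun i => c i + c' i).
Proof. by rewrite /comb -big_split /=; apply: eq_bigr => i _; rewrite mulrzDr. Qed.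
Lemma combZ k x c t : comb k x c *~ t = comb k x (fun i => c i * t).
Proof. by rewrite /comb mulrz_suml; apply: eq_bigr => i _; rewrite mulrzA. Qed.
Lemma combN k x c : - comb k x c = comb k x (fun i => - c i).
Proof. by rewrite /comb -sumrN; apply: eq_bigr => i _; rewrite mulrNz. Qed.
Lemma comb0 k x : comb k x (fun _ => 0) = 0.
Proof. by rewrite /comb big1 // => i _; rewrite mulr0z. Qed.

Lemma indep_le n e k x : gens n e -> indep k x -> (k <= n)%N.
Proof.
move=> hg hi; rewrite leqNgt; apply/negP => hnk.
pose V i j := proj1_sig (constructive_indefinite_description _ (hg (x i))) j.
have hV i : x i = comb n e (V i).
  exact: proj2_sig (constructive_indefinite_description _ (hg (x i))).
have [c [[i [hik hc]] hs]] := LA1 V hnk.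
suff : comb k x c = 0 by move/hi => /(_ i hik) /eqP; rewrite (negbTE hc).
rewrite /comb; under eq_bigr => i' _ do rewrite hV /comb mulrz_suml.
rewrite exchange_big /= big1 // => j _.
rewrite -[RHS](mulr0z (e j)) -(hs j (ltn_ord j)) mulrz_sumr.
by apply: eq_bigr => i' _; rewrite -mulrzA mulrC.
Qed.
End Indep.

Lemma max_exists (P : nat -> Prop) N : P 0%N -> (forall k, P k -> (k <= N)%N) ->
  exists k, P k /\ forall k', P k' -> (k' <= k)%N.
Proof.
move=> h0 hb; apply: NNPP => hno.
have step : forall k, P k -> exists k', P k' /\ (k < k')%N.
  move=> k hk; apply: NNPP => hn; apply: hno; exists k; split => // k' hk'.
  rewrite leqNgt; apply/negP => hlt; apply: hn; by exists k'.
have : forall m, exists k, P k /\ (m <= k)%N.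
  elim=> [|m [k [hk hmk]]]; first by exists 0%N.
  have [k' [hk' hkk']] := step k hk; exists k'; split => //.
  exact: leq_ltn_trans hmk hkk'.
move=> /(_ N.+1) [k [hk hNk]]; have := hb k hk.
by rewrite leqNgt (leq_trans (ltnSn N) hNk).
Qed.

Section LA2.
Variable A : zmodType.
Variable n : nat.
Variable e : nat -> A.
Hypothesis hg : gens n e.

Lemma LA2 (a : A) : (forall m, a *~ m = 0 -> m = 0) ->
  exists phi : A -> int, (forall y z, phi (y + z) = phi y + phi z) /\ phi a != 0.
Proof.
move=> ha.
pose P k := exists x : nat -> A, x 0%N = a /\ indep k.+1 x.
have P0 : P 0%N.
  exists (fun _ => a); split => // c; rewrite /comb big_ord1 => /ha h0 i.
  by rewrite ltnS leqn0 => /eqP ->.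
have [k [[x [hx0 hxi]] hmax]] := max_exists P0 (fun k (hk : P k) =>
  let: ex_intro x (conj _ hi) := hk in ltnW (indep_le hg hi)).
have hy : forall y, exists m, m != 0 /\ exists c, y *~ m = comb k.+1 x c.
  move=> y; pose x' i := if i == k.+1 then y else x i.
  have hnot : ~ indep k.+2 x'.
    move=> hi; have : P k.+1 by exists x'; split.
    by move/hmax; rewrite ltnn.
  apply: NNPP => hno; apply: hnot => c hc.
  have hsplit : comb k.+2 x' c = comb k.+1 x c + y *~ c k.+1.
    rewrite /comb big_ord_recr /= /x' eqxx; congr (_ + _).
    by apply: eq_bigr => i _; rewrite ltn_eqF.
  have hck : c k.+1 = 0.
    apply: NNPP => /eqP hm; apply: hno; exists (c k.+1); split => //.
    exists (fun i => - c i); rewrite -combN; apply/eqP; rewrite -addr_eq0.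
    by rewrite addrC -hsplit hc.
  have hcx : comb k.+1 x c = 0 by rewrite -[LHS]addr0 -[X in _ + X](mulr0z y) -hck -hsplit.
  move=> i; rewrite ltnS leq_eqVlt => /orP [/eqP -> //|hi].
  exact: hxi hcx i hi.
have hM : forall n', exists M, M != 0 /\ forall j, (j < n')%N -> exists c, e j *~ M = comb k.+1 x c.
  elim=> [|n' [M [hM0 hMj]]]; first by exists 1.
  have [m [hm0 [c hc]]] := hy (e n').
  exists (M * m); split; first by rewrite mulf_neq0.
  move=> j; rewrite ltnS leq_eqVlt => /orP [/eqP ->|hj].
    by exists (fun i => c i * M); rewrite mulrC mulrzA hc combZ.
  have [c' hc'] := hMj j hj; exists (fun i => c' i * m); by rewrite mulrzA hc' combZ.
have [M [hM0 hMj]] := hM n.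
have hspan : forall y, exists c, y *~ M = comb k.+1 x c.
  move=> y; have [v ->] := hg y.
  rewrite /comb mulrz_suml.
  elim/big_ind: _.
  - by exists (fun _ => 0); rewrite -[LHS](comb0 k.+1 x).
  - by move=> y1 y2 [c1 ->] [c2 ->]; exists (fun i => c1 i + c2 i); apply: combD.
  - move=> j _; have [c hc] := hMj j (ltn_ord j).
    by exists (fun i => c i * v j); rewrite -mulrzA mulrC mulrzA hc combZ.
pose phi y := proj1_sig (constructive_indefinite_description _ (hspan y)) 0%N.
have hphi y : y *~ M = comb k.+1 x (proj1_sig (constructive_indefinite_description _ (hspan y))).
  exact: proj2_sig (constructive_indefinite_description _ (hspan y)).
have uniq0 : forall c c', comb k.+1 x c = comb k.+1 x c' -> c 0%N = c' 0%N.
  move=> c c' h; apply/eqP; rewrite -subr_eq0; apply/eqP.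
  apply: (hxi (fun i => c i - c' i)) => //.
  by rewrite -combD -combN h addrN.
exists phi; split.
  move=> y z; rewrite /phi.
  pose CD := constructive_indefinite_description.
  apply: (uniq0 _ (fun i => proj1_sig (CD _ _ (hspan y)) i + proj1_sig (CD _ _ (hspan z)) i)).
  by rewrite -combD -!hphi mulrzDl.
rewrite /phi (@uniq0 _ (fun i => if i == 0%N then M else 0)) //.
rewrite -hphi /comb big_ord_recl /= hx0 big1 ?addr0 //.
Qed.
End LA2.

End M3.
Import M3.

Module M4.

Section Gen.
Variables (F : group) (X : Type) (b : X -> F).
Hypothesis hfree : free_on b.
Variable P : F -> Prop.
Hypothesis P1 : P gone.
Hypothesis PM : forall x y, P x -> P y -> P (gmul x y).
Hypothesis PV : forall x, P x -> P (ginv x).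
Hypothesis Pb : forall x, P (b x).

Definition Subc := {g : F | P g}.
Definition smul (a c : Subc) : Subc := exist _ _ (PM (proj2_sig a) (proj2_sig c)).
Definition sone : Subc := exist _ _ P1.
Definition sinv (a : Subc) : Subc := exist _ _ (PV (proj2_sig a)).
Lemma Sub_ext (a c : Subc) : proj1_sig a = proj1_sig c -> a = c.
Proof. case: a => a ha; case: c => c hc /= e; subst c; by rewrite (proof_irrelevance _ ha hc). Qed.
Definition SubG : group.
Proof.
refine (@Defs.Group Subc smul sone sinv _ _ _ _ _) => *; apply: Sub_ext => /=.
- exact: gmulA. - exact: gmul1l. - exact: gmul1r. - exact: gmulVl. - exact: gmulVr.
Defined.

Lemma gen_all g : P g.
Proof.
have [phi [hphi [hb _]]] := hfree (K := SubG) (fun x => exist _ (b x) (Pb x)).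
have [phi0 [_ [_ huniq]]] := hfree (K := F) b.
have e1 := huniq (fun g => proj1_sig (phi g : Subc)) (fun x y => f_equal (@proj1_sig _ _) (hphi x y))
   (fun x => f_equal (@proj1_sig _ _) (hb x)) g.
have e2 := huniq id (fun x y => erefl) (fun x => erefl) g.
have : proj1_sig (phi g : Subc) = g by rewrite e1 -e2.
move=> <-; exact: proj2_sig (phi g : Subc).
Qed.
End Gen.

Section Zpow.
Variable G : group.
Lemma zpow_succ (g : G) z : zpow g (Z.succ z) = gmul g (zpow g z).
Proof.
case: z => [|p|p].
- by rewrite /= gmul1r.
- by rewrite /= Pos.add_1_r Pos2Nat.inj_succ.
- case: (Pos.succ_pred_or p) => [->|<-]; first by rewrite /= gmul1r gmulVr.
  rewrite (_ : Z.succ (Z.neg (Pos.succ (Pos.pred p))) = Z.neg (Pos.pred p)); last by lia.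
  by rewrite /= Pos2Nat.inj_succ npowSr ginvM gmulKVg.
Qed.
Lemma zpow_pred (g : G) z : zpow g (Z.pred z) = gmul (ginv g) (zpow g z).
Proof.
case: z => [|p|p].
- by rewrite /= gmul1r gmul1r.
- case: (Pos.succ_pred_or p) => [->|<-]; first by rewrite /= gmul1r gmulVl.
  rewrite (_ : Z.pred (Z.pos (Pos.succ (Pos.pred p))) = Z.pos (Pos.pred p)); last by lia.
  by rewrite /= Pos2Nat.inj_succ /= gmulKg.
- by rewrite /= Pos.add_1_r Pos2Nat.inj_succ npowSr ginvM.
Qed.
Lemma zpow_add (g : G) a c : zpow g (a + c) = gmul (zpow g a) (zpow g c).
Proof.
elim/Z.peano_ind: a => [|a IH|a IH].
- by rewrite /= gmul1l.
- by rewrite Z.add_succ_l !zpow_succ IH gmulA.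
- by rewrite Z.add_pred_l !zpow_pred IH gmulA.
Qed.
End Zpow.

End M4.
Import M4.

Module M5.

Section Words.
Variable X : Type.
Definition letter := (X * bool)%type.
Definition linv (l : letter) : letter := (l.1, ~~ l.2).
Lemma linvK l : linv (linv l) = l. Proof. by case: l => x [] . Qed.
Lemma linv_neq l : linv l <> l. Proof. by case: l => x [] []. Qed.

Fixpoint reduced (w : seq letter) : Prop :=
  match w with
  | l1 :: w' => match w' with
                | l2 :: _ => l2 <> linv l1 /\ reduced w'
                | [::] => True
                end
  | [::] => True
  end.

Lemma reduced_cons l w : reduced (l :: w) <-> reduced w /\ (forall l2 w2, w = l2 :: w2 -> l2 <> linv l).
Proof.
case: w => [|l2 w2] /=.
  by split => // _; split => // ? ? .
split.
  by move=> [h1 h2]; split => // l3 w3 [<- _].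
by move=> [h1 h2]; split => //; exact: h2 _ _ erefl.
Qed.

Definition olast (a : seq letter) : option letter := if a is x :: s then Some (last x s) else None.
Definition junc (a c : seq letter) :=
  forall l1 l2, olast a = Some l1 -> ohead c = Some l2 -> l2 <> linv l1.

Lemma reduced_cat a c : reduced (a ++ c) <-> [/\ reduced a, reduced c & junc a c].
Proof.
elim: a => [|l a IH].
  by rewrite cat0s; split; [move=> h; split => // ? ? [] | case].
rewrite cat_cons reduced_cons IH.
split.
- move=> [[ha hc hj] hl]; split => //.
  + apply/reduced_cons; split => // l2 w2 e; apply: (hl l2 (w2 ++ c)); by rewrite e.
  + move=> l1 l2 /= [<-] hc2.
    case: a hl hj {ha IH} => [|l3 a] hl hj /=.
      by case: c hc2 hl {hc hj} => // l4 c [<-] hl; apply: hl.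
    by apply: hj.
- case=> /reduced_cons [ha hl] hc hj; split; first split => //.
  + move=> l1 l2 ha1 hc2; apply: hj => //.
    by case: a ha1 {ha hl IH} => // l3 a [<-].
  + move=> l2 w2.
    case: a hl hj {ha IH} => [|l3 a] hl hj /=.
      case: c hc hj => // l4 c _ hj [<- _]; by apply: hj.
    by move=> [<- _]; apply: hl.
Qed.

Definition push (l : letter) (w : seq letter) : seq letter :=
  if w is l' :: w' then (if cldec (l' = linv l) then w' else l :: w) else [:: l].

Lemma push_red l w : reduced w -> reduced (push l w).
Proof.
case: w => [|l' w] //= hw.
case: cldecP => [_|hn]; first by move/reduced_cons: hw => [].
by split.
Qed.

Lemma push_inv l w : reduced w -> push (linv l) (push l w) = w.
Proof.
case: w => [|l' w] /= hw.
  by case: cldecP => // hn2; exfalso; apply: hn2; rewrite linvK.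
case: cldecP => [e|hn].
  case: w hw => [|l'' w] /= hw.
    by rewrite -e.
  case: cldecP => [e2|_]; last by rewrite e.
  by exfalso; move: hw => [h _]; apply: h; rewrite e2 -e.
rewrite /=; case: cldecP => // hn2; exfalso; apply: hn2; by rewrite linvK.
Qed.

Definition RW := {w : seq letter | reduced w}.
Definition pushRW (l : letter) (w : RW) : RW := exist _ _ (push_red l (proj2_sig w)).
Lemma RW_ext (u v : RW) : proj1_sig u = proj1_sig v -> u = v.
Proof. case: u => u hu; case: v => v hv /= e; subst v; by rewrite (proof_irrelevance _ hu hv). Qed.
Lemma pushRW_inv l w : pushRW (linv l) (pushRW l w) = w.
Proof. by apply: RW_ext; rewrite /= push_inv //; exact: proj2_sig w. Qed.

Record perm := Perm { pf : RW -> RW; pb : RW -> RW;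
  pfb : forall w, pf (pb w) = w; pbf : forall w, pb (pf w) = w }.

Lemma perm_ext (p q : perm) : (forall w, pf p w = pf q w) -> p = q.
Proof.
move=> h.
have hb : forall w, pb p w = pb q w.
  by move=> w; rewrite -{2}(pfb p w) h pbf.
case: p q h hb => [f1 b1 fb1 bf1] [f2 b2 fb2 bf2] /= h hb.
have ef := functional_extensionality _ _ h; have eb := functional_extensionality _ _ hb.
subst f2 b2.
by rewrite (proof_irrelevance _ fb1 fb2) (proof_irrelevance _ bf1 bf2).
Qed.

Definition pmul (p q : perm) : perm.
Proof.
refine (@Perm (fun w => pf p (pf q w)) (fun w => pb q (pb p w)) _ _) => w.
- by rewrite !pfb. - by rewrite !pbf.
Defined.
Definition pone : perm := @Perm id id (fun _ => erefl) (fun _ => erefl).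
Definition pinv (p : perm) : perm := @Perm (pb p) (pf p) (pbf p) (pfb p).

Definition Sym : group.
Proof.
refine (@Defs.Group perm pmul pone pinv _ _ _ _ _) => *; apply: perm_ext => w //=.
- by rewrite pbf. - by rewrite pfb.
Defined.

Definition pushP (l : letter) : perm.
Proof.
refine (@Perm (pushRW l) (pushRW (linv l)) _ _) => w.
- by rewrite -{1}(linvK l) pushRW_inv.
- exact: pushRW_inv.
Defined.
End Words.

Lemma npow_conj (G : group) (g h : G) n :
  npow (gmul g (gmul h (ginv g))) n = gmul g (gmul (npow h n) (ginv g)).
Proof.
elim: n => [|n IH] /=; first by rewrite gmul1l gmulVr.
by rewrite IH -!gmulA gmulKg.
Qed.

Section Words2.
Variable X : Type.
Definition winv (a : seq (letter X)) := rev (map (@linv X) a).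
Fixpoint cpow (c : seq (letter X)) m := if m is m'.+1 then c ++ cpow c m' else [::].

Lemma decomp_aux n : forall w : seq (letter X), (size w < n)%N -> reduced w -> w <> [::] ->
  exists a c, w = a ++ c ++ winv a /\ c <> [::] /\ reduced (c ++ c).
Proof.
elim: n => [|n IH] w //= hs hw hne.
case: (classic (junc w w)) => hj.
  exists [::], w; split; first by rewrite /= /winv /= cats0.
  by split => //; apply/reduced_cat.
have [l1 [l2 [hl1 [hl2 e]]]] : exists l1 l2, olast w = Some l1 /\ ohead w = Some l2 /\ l2 = linv l1.
  apply: NNPP => hno; apply: hj => l1 l2 h1 h2 e; apply: hno; exists l1, l2; split => //; split => //.
case: w hs hw hne hl1 hl2 {hj} => [|l w] // hs hw _ hl1 [e2]; subst l.
case/lastP: w hs hw hl1 => [|w' l1'] hs hw hl1.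
  move: hl1 => /= [e1]; exfalso; have := @linv_neq _ l1; rewrite -e e1; by apply.
move: hl1; rewrite /= last_rcons => -[e1]; subst l1'.
have hw' : reduced w'.
  by move/reduced_cons: hw => [hw1 _]; move: hw1; rewrite -cats1 => /reduced_cat [].
case: w' hs hw hw' => [|l3 w'] hs hw hw'.
  exfalso; move: hw => /= [h _]; apply: h; by rewrite e linvK.
have hs' : (size (l3 :: w') < n)%N by move: hs; rewrite /= size_rcons !ltnS => /ltnW.
have [a [c [ew [hc hcc]]]] := IH (l3 :: w') hs' hw' (fun h => ltac:(discriminate)).
exists (linv l1 :: a), c; split => //.
rewrite ew /winv /= rev_cons linvK -rcons_cat -rcons_cat; congr (_ :: _).
exact: e.
Qed.

Lemma decomp (w : seq (letter X)) : reduced w -> w <> [::] ->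
  exists a c, w = a ++ c ++ winv a /\ c <> [::] /\ reduced (c ++ c).
Proof. exact: decomp_aux (ltnSn (size w)). Qed.

Lemma cpow_red c m : c <> [::] -> reduced (c ++ c) -> reduced (cpow c m.+1).
Proof.
move=> hc hcc; move/reduced_cat: (hcc) => [hr _ hj].
elim: m => [|m IH] /=; first by rewrite cats0.
apply/reduced_cat; split => // l1 l2 h1 h2; apply: hj h1 _.
by case: c hc {hr hcc IH} h2 => [//|l c] _ /=; exact: id.
Qed.
Lemma cpow_ne c m : c <> [::] -> cpow c m.+1 <> [::].
Proof. by case: c => //= l c _. Qed.
End Words2.

Section Free.
Variables (F : group) (X : Type) (b : X -> F).
Hypothesis hfree : free_on b.

Definition kgen (x : X) : Sym X := pushP (x, false).
Definition PhiS := constructive_indefinite_description _ (hfree (K := Sym X) kgen).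
Definition Phi : F -> Sym X := proj1_sig PhiS.
Lemma Phi_hom : is_hom Phi. Proof. by have [h _] := proj2_sig PhiS. Qed.
Lemma Phi_b x : Phi (b x) = kgen x. Proof. by have [_ [h _]] := proj2_sig PhiS. Qed.

Definition lett (l : letter X) : F := if l.2 then ginv (b l.1) else b l.1.
Definition psi (w : seq (letter X)) : F := foldr (fun l g => gmul (lett l) g) gone w.
Definition eps : RW X := exist _ [::] I.

Lemma lett_linv l : lett (linv l) = ginv (lett l).
Proof. by case: l => x [] /=; rewrite ?ginvK. Qed.

Lemma psi_push l w : psi (push l w) = gmul (lett l) (psi w).
Proof.
case: w => [|l' w] /=; first by [].
case: cldecP => [e|_] //; by rewrite e lett_linv gmulKVg.
Qed.

Lemma Phi_lett l w : pf (Phi (lett l)) w = pushRW l w.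
Proof.
case: l => x [] /=.
- by rewrite (homV Phi_hom) Phi_b.
- by rewrite Phi_b.
Qed.

Lemma Phi_act g : forall w, psi (proj1_sig (pf (Phi g) w)) = gmul g (psi (proj1_sig w)).
Proof.
apply: (gen_all hfree (P := fun g => forall w, psi (proj1_sig (pf (Phi g) w)) = gmul g (psi (proj1_sig w)))).
- by move=> w; rewrite (hom1 Phi_hom) gmul1l.
- by move=> g1 h1 hg hh w; rewrite Phi_hom /= hg hh gmulA.
- move=> g1 hg w; rewrite (homV Phi_hom) /=.
  apply: (@gmulIg _ g1); rewrite gmulKVg -hg.
  by rewrite (pfb (Phi g1)).
- by move=> x w; rewrite Phi_b /= psi_push.
Qed.

Lemma Phi_psi v : reduced v -> proj1_sig (pf (Phi (psi v)) eps) = v.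
Proof.
elim: v => [|l v IH] hv /=.
  by rewrite (hom1 Phi_hom).
rewrite Phi_hom /= Phi_lett /= IH; last by move/reduced_cons: hv => [].
case: v hv {IH} => [|l' v] //= [hl _].
by case: cldecP.
Qed.

Lemma psi_cat a c : psi (a ++ c) = gmul (psi a) (psi c).
Proof. elim: a => [|l a IH] /=; first by rewrite gmul1l. by rewrite IH gmulA. Qed.

Lemma psi_winv a : psi (winv a) = ginv (psi a).
Proof.
elim: a => [|l a IH]; first by rewrite /= ginv1.
rewrite /winv /= rev_cons -cats1 psi_cat -/(winv a) IH /= lett_linv gmul1r.
by rewrite -ginvM.
Qed.

Lemma psi_cpow c m : psi (cpow c m) = npow (psi c) m.
Proof. by elim: m => [|m IH] //=; rewrite psi_cat IH. Qed.

Lemma free_torsionfree (u : F) n : npow u n.+1 = gone -> u = gone.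
Proof.
move=> hu.
pose w := proj1_sig (pf (Phi u) eps).
have hw : reduced w by exact: proj2_sig (pf (Phi u) eps).
have hpw : psi w = u by rewrite /w Phi_act /= gmul1r.
case: (classic (w = [::])) => [e|hne].
  by rewrite -hpw e.
have [a [c [ew [hc hcc]]]] := decomp hw hne.
have hu' : u = gmul (psi a) (gmul (psi c) (ginv (psi a))).
  by rewrite -hpw ew !psi_cat psi_winv.
move: hu; rewrite hu' npow_conj => hu2.
have hc1 : npow (psi c) n.+1 = gone.
  apply: (@gmulIg _ (psi a)); apply: (@gmulgI _ (ginv (psi a))).
  by rewrite gmul1r gmulVr -gmulA.
exfalso; apply: (@cpow_ne _ c n hc).
rewrite -(Phi_psi (cpow_red n hc hcc)) psi_cpow hc1 (hom1 Phi_hom).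
by [].
Qed.
End Free.

End M5.
Import M5.

Module M6.
Import GRing.Theory.

Lemma i2Z_add (m n : int) : i2Z (m + n)%R = Z.add (i2Z m) (i2Z n).
Proof.
change (m + n)%R with (intZmod.addz m n).
case: m => m; case: n => n; rewrite /intZmod.addz;
 try (case: ltnP => /leP h); rewrite /i2Z -?minusE -?plusE; lia.
Qed.

Lemma length_size T (l : seq T) : length l = size l.
Proof. by elim: l => //= x l ->. Qed.

Definition Zgrp : group.
Proof.
refine (@Defs.Group int (fun a c => a + c)%R 0%R (fun a => - a)%R _ _ _ _ _) => *.
- exact: addrA. - exact: add0r. - exact: addr0. - exact: addNr. - exact: addrN.
Defined.

Lemma Zgrp_npow n : npow (1%R : Zgrp) n = Posz n.
Proof. elim: n => [|n IH] //=; rewrite IH; by rewrite intS. Qed.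
Lemma Zgrp_zpow z : zpow (1%R : Zgrp) z = Z2i z.
Proof. by case: z => [|p|p] //=; rewrite Zgrp_npow. Qed.

Lemma zpow_gone (G : group) z : zpow (gone : G) z = gone.
Proof. by case: z => [|p|p] //=; rewrite npow1 ?ginv1. Qed.

Section Iota.
Variables (F : group) (X : Type) (b : X -> F) (x0 : X).
Hypothesis hfree : free_on b.
Definition iota_F (m : int) : F := zpow (b x0) (i2Z m).
Lemma iota_add m1 m2 : iota_F (m1 + m2)%R = gmul (iota_F m1) (iota_F m2).
Proof. by rewrite /iota_F i2Z_add zpow_add. Qed.
Lemma iota_eq1 m : iota_F m = gone -> m = 0%R.
Proof.
have [chi [hchi [hb _]]] := hfree (K := Zgrp) (fun _ => 1%R).
move=> h; have := f_equal chi h; rewrite /iota_F (hom_zpow hchi) hb Zgrp_zpow Z2iK.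
by rewrite (hom1 hchi).
Qed.
End Iota.

Local Open Scope ring_scope.
Section AbFacts.
Variable G : group.
Definition xs (gs : seq G) (i : nat) : Ab G := pab (nth gone gs i).
Definition cs (ns : seq Z) (i : nat) : int := Z2i (nth Z0 ns i).

Lemma pab_lin_comb (gs : seq G) ns : length ns = length gs ->
  pab (lin_comb gs ns) = comb (size gs) (xs gs) (cs ns).
Proof.
elim: gs ns => [|g gs IH] [|m ns] //= e.
  by rewrite /comb big_ord0.
rewrite pabM pab_zpow IH; last by case: e.
by rewrite /comb big_ord_recl.
Qed.

Lemma Forall_of_cs (ns : seq Z) : (forall i, (i < size ns)%N -> cs ns i = 0) ->
  Forall (fun n => n = Z0) ns.
Proof.
elim: ns => [|m ns IH] h; first by constructor.
constructor; first by apply: Z2i_eq0; exact: (h 0%N).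
by apply: IH => i hi; exact: (h i.+1).
Qed.

Lemma cs_of_Forall (ns : seq Z) i : Forall (fun n => n = Z0) ns -> cs ns i = 0.
Proof.
elim: ns i => [|m ns IH] i h; first by rewrite /cs nth_nil.
inversion h; subst; case: i => [|i] //; exact: IH.
Qed.

Lemma abind_indep (gs : seq G) : ab_independent gs -> indep (size gs) (xs gs).
Proof.
move=> h c hc i hi.
pose ns := map (fun j => i2Z (c j)) (iota 0 (size gs)).
have hl : length ns = length gs by rewrite !length_size size_map size_iota.
have hcs : forall j, (j < size gs)%N -> cs ns j = c j.
  by move=> j hj; rewrite /cs (nth_map 0%N) ?size_iota // nth_iota // add0n Z2iK.
have : comm_sub (lin_comb gs ns).
  apply/pab_eq0; rewrite pab_lin_comb // -hc /comb; apply: eq_bigr => j _.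
  by rewrite hcs.
move/(h ns hl)/(cs_of_Forall i); by rewrite hcs.
Qed.

Lemma nth_std (S : seq G) j : List.nth j S gone = nth gone S j.
Proof. by elim: S j => [|x S IH] [|j] //=. Qed.

Lemma gens_fin (S : seq G) : (forall x, generated S x) -> gens (size S) (xs S).
Proof.
move=> hS y; have [g <-] := pab_surj y.
elim: (hS g) => [x hx||x1 x2 _ [v1 e1] _ [v2 e2]|x _ [v e]].
- have [j [hj e]] := In_nth _ _ gone hx.
  rewrite length_size in hj; move/ltP: hj => hj.
  exists (fun i => if i == j then 1 else 0).
  rewrite /comb (bigD1 (Ordinal hj)) //= eqxx mulr1z big1 ?addr0.
    by rewrite /xs -nth_std e.
  move=> i hi; rewrite ifF ?mulr0z //; apply: contraNF hi => /eqP hij.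
  by apply/eqP; apply: val_inj.
- by exists (fun _ => 0); rewrite comb0.
- by rewrite pabM e1 e2; exists (fun i => v1 i + v2 i); rewrite combD.
- by rewrite pabV e; exists (fun i => - v i); rewrite combN.
Qed.
End AbFacts.

Lemma KL1 (F : group) X (b : X -> F) (x0 : X) (hfree : free_on b) (G : group) (z : G) :
  fin_gen G -> (forall m : int, pab z *~ m = 0 -> m = 0) ->
  exists th : G -> F, is_hom th /\ th z <> gone.
Proof.
move=> [S hS] ha.
have [phi [hphi hphia]] := LA2 (gens_fin hS) ha.
exists (fun g => iota_F b x0 (phi (pab g))); split.
  by move=> g h; rewrite pabM hphi iota_add.
by move/(iota_eq1 hfree)/eqP; rewrite (negbTE hphia).
Qed.

Lemma KL2 (G : group) : fin_gen G -> exists k, is_b1 G k.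
Proof.
move=> [S hS].
pose P k := exists gs : seq G, length gs = k /\ ab_independent gs.
have P0 : P 0%N.
  exists [::]; split => // -[|n ns] //= _ _; constructor.
have hb : forall k, P k -> (k <= size S)%N.
  move=> k [gs [<- hi]]; rewrite length_size.
  exact: indep_le (gens_fin hS) (abind_indep hi).
have [k [hk hmax]] := max_exists P0 hb.
exists k; split => // gs hi; apply/leP; apply: hmax; by exists gs.
Qed.

Section EpiFacts.
Variables (G H : group) (f : G -> H).
Hypothesis hf : is_hom f.
Hypothesis hs : surjective f.

Lemma cs_lift y : comm_sub y -> exists c, comm_sub c /\ f c = y.
Proof.
elim=> [x y'||a c _ [a' [ha ea]] _ [c' [hc ec]]|a _ [a' [ha ea]]].
- have [x1 <-] := hs x; have [y1 <-] := hs y'.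
  exists (gmul (gmul (ginv x1) (ginv y1)) (gmul x1 y1)); split; first exact: cs_comm.
  by rewrite !hf !(homV hf).
- by exists gone; split; [exact: cs_one | exact: hom1].
- by exists (gmul a' c'); split; [exact: cs_mul | rewrite hf ea ec].
- by exists (ginv a'); split; [exact: cs_inv | rewrite (homV hf) ea].
Qed.

Lemma list_lift (hl : seq H) : exists gl : seq G, map f gl = hl.
Proof.
elim: hl => [|h hl [gl e]]; first by exists [::].
have [g <-] := hs h; exists (g :: gl); by rewrite /= e.
Qed.

Lemma factor (K : group) (phi : G -> K) : is_hom phi ->
  (forall z, f z = gone -> phi z = gone) ->
  exists phi' : H -> K, is_hom phi' /\ forall g, phi' (f g) = phi g.
Proof.
move=> hphi hker.
have heq : forall a c, f a = f c -> phi a = phi c.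
  move=> a c e.
  have : phi (gmul (ginv c) a) = gone by apply: hker; rewrite hf (homV hf) e gmulVl.
  rewrite hphi (homV hphi) => h.
  by apply: (@gmulIg _ (ginv (phi c))); rewrite h gmulVl.
pose sec h := proj1_sig (constructive_indefinite_description _ (hs h)).
have hsec h : f (sec h) = h by exact: proj2_sig (constructive_indefinite_description _ (hs h)).
exists (fun h => phi (sec h)); split.
  by move=> h1 h2; rewrite -hphi; apply: heq; rewrite hf !hsec.
by move=> g; apply: heq; rewrite hsec.
Qed.
End EpiFacts.

Lemma lin_comb_app (G : group) (gs1 gs2 : seq G) ns1 ns2 : size gs1 = size ns1 ->
  lin_comb (gs1 ++ gs2) (ns1 ++ ns2) = gmul (lin_comb gs1 ns1) (lin_comb gs2 ns2).
Proof.
elim: gs1 ns1 => [|g gs1 IH] [|m ns1] //= e; first by rewrite gmul1l.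
by rewrite IH ?gmulA //; case: e.
Qed.

Lemma lin_comb_zero (G : group) (gs : seq G) ns : Forall (fun n => n = Z0) ns -> lin_comb gs ns = gone.
Proof.
elim: gs ns => [|g gs IH] [|m ns] //= h.
inversion h; subst; by rewrite IH // gmul1l.
Qed.

Lemma abelian_kills (G K : group) (phi : G -> K) : is_hom phi ->
  (forall a c, gmul (phi a) (phi c) = gmul (phi c) (phi a)) ->
  forall y, comm_sub y -> phi y = gone.
Proof.
move=> hphi hab y; elim=> [x y'||a c _ ha _ hc|a _ ha].
- by rewrite !hphi !(homV hphi) [gmul (phi x) (phi y')]hab -gmulA gmulKg gmulVl.
- exact: hom1.
- by rewrite hphi ha hc gmul1l.
- by rewrite (homV hphi) ha ginv1.
Qed.

End M6.
Import M6.

Module M7.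
Import GRing.Theory.

Lemma Forall_cat1 (ns : seq Z) m : Forall (fun n => n = Z0) ns -> m = Z0 ->
  Forall (fun n => n = Z0) (ns ++ [:: m]).
Proof. by move=> h ->; elim: h => [|x l hx _ IH] /=; constructor. Qed.

End M7.
Import M7.
Import GRing.Theory.

Theorem mainTheorem5 :
  forall (F : group), nonabelian_free F ->
  forall (G H : group) (f : G -> H),
    fin_gen G -> fin_gen H -> is_epi f ->
    (fRF_iso F f <->
       (fna_iso F f /\ exists k : nat, is_b1 G k /\ is_b1 H k)).
Proof.
move=> F [[X [b hfree]] [x1 [y1 hxy]]] G H f hG hH [hf hs].
have [x0 _] : exists x0 : X, True.
  apply: NNPP => hno; apply: hxy.
  have all1 : forall g : F, g = gone.
    apply: (gen_all hfree (P := fun g => g = gone)) => //.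
    - by move=> ? ? -> ->; rewrite gmul1l.
    - by move=> ? ->; rewrite ginv1.
    - by move=> x; exfalso; apply: hno; exists x.
  by rewrite (all1 x1) (all1 y1).
split.
- move=> [h1 h2].
  have ker : forall z, f z = gone -> forall phi : G -> F, is_hom phi -> phi z = gone.
    move=> z hz phi hphi.
    have : RF_rel F G z gone by apply: h1 => psi hpsi; rewrite hz (hom1 hf).
    by move/(_ phi hphi); rewrite (hom1 hphi).
  split.
    split.
      move=> x y hxy' phi hphi [a [c hna]].
      have [phi' [hphi' e]] := factor hf hs hphi (fun z hz => ker z hz phi hphi).
      rewrite -!e; apply: hxy' => //; exists (f a), (f c); by rewrite !e.
    by move=> h; have [g eg] := hs h; exists g => phi _ _; rewrite eg.
  have [k [[gs [hlen hind]] hmax]] := KL2 hG.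
  exists k; split; first by split => //; exists gs.
  split.
    exists (map f gs); split; first by rewrite length_size size_map -length_size.
    move=> ns hl hc; rewrite -(hom_lin_comb hf) in hc.
    apply: NNPP => hnz.
    have hl' : length ns = length gs by rewrite hl !length_size size_map.
    have hpw := pab_lin_comb hl'.
    have [i0 [hi0 hci0]] : exists i, (i < size gs)%N /\ cs ns i != 0%R.
      apply: NNPP => hno; apply: hnz; apply: Forall_of_cs => i hi.
      apply/eqP; apply: NNPP => hne; apply: hno; exists i; split; last by apply/negP.
      by rewrite -length_size -hl' length_size.
    have [c [hc1 hc2]] := cs_lift hf hs hc.
    pose z := gmul (ginv c) (lin_comb gs ns).
    have hfz : f z = gone by rewrite /z hf (homV hf) hc2 gmulVl.
    have hpz : pab z = pab (lin_comb gs ns).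
      by rewrite /z pabM pabV (proj2 (pab_eq0 c) hc1) oppr0 add0r.
    have hnt : forall m : int, (pab z *~ m = 0)%R -> m = 0%R.
      move=> m; rewrite hpz hpw combZ => /(abind_indep hind) h0.
      by have := h0 i0 hi0; move/eqP; rewrite mulf_eq0 (negbTE hci0) /= => /eqP.
    have [th [hth hthz]] := KL1 x0 hfree hG hnt.
    apply: hthz.
    have : RF_rel F G z gone by apply: h1 => psi hpsi; rewrite hfz (hom1 hf).
    by move/(_ th hth); rewrite (hom1 hth).
  move=> hs' hind'.
  have [gs' e] := list_lift hs hs'.
  have hind2 : ab_independent gs'.
    move=> ns hl hc; apply: hind'.
      by rewrite hl -e !length_size size_map.
    rewrite -e -(hom_lin_comb hf). exact: (hom_comm_sub hf hc).
  by rewrite -e length_size size_map -length_size; exact: hmax.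
- move=> [[hna1 hna2] [k [hbG hbH]]].
  have ker : forall z, f z = gone -> forall phi : G -> F, is_hom phi -> phi z = gone.
    move=> z hz phi hphi.
    case: (classic (nonabelian_image phi)) => hnab.
      have : RFna_rel F G z gone by apply: hna1 => psi hpsi _; rewrite hz (hom1 hf).
      by move/(_ phi hphi hnab); rewrite (hom1 hphi).
    have hab : forall a c, gmul (phi a) (phi c) = gmul (phi c) (phi a).
      by move=> a c; apply: NNPP => hne; apply: hnab; exists a, c.
    have [m [hm hcm]] : exists m, m <> Z0 /\ comm_sub (zpow z m).
      apply: NNPP => hno.
      have [[gs [hlen hind]] _] := hbH.
      have [gs' e] := list_lift hs gs.
      have hsz : size gs' = k by rewrite -hlen -e length_size size_map.
      have hind2 : ab_independent (gs' ++ [:: z]).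
        move=> ns hl hc.
        have hns : size ns = k.+1 by rewrite -length_size hl length_size size_cat hsz addn1.
        case/lastP: ns hl hc hns => [//|ns1 m] hl hc hns.
        rewrite size_rcons in hns; case: hns => hns.
        rewrite -cats1 lin_comb_app ?hsz // in hc.
        have h1 : Forall (fun n => n = Z0) ns1.
          apply: hind; first by rewrite hlen length_size.
          have := hom_comm_sub hf hc.
          by rewrite hf (hom_lin_comb hf) e /= hf (hom_zpow hf) hz zpow_gone (hom1 hf) !gmul1r.
        rewrite lin_comb_zero // gmul1l /= gmul1r in hc.
        rewrite -cats1; apply: Forall_cat1 => //.
        by apply: NNPP => hm; apply: hno; exists m.
      have := proj2 hbG _ hind2.
      rewrite length_size size_cat hsz addn1 => /leP; by rewrite ltnn.
    have : phi (zpow z m) = gone by apply: abelian_kills hphi hab _ hcm.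
    rewrite (hom_zpow hphi).
    case: m hm {hcm} => [//|p|p] _ /=.
      by case e: (Pos.to_nat p) => [|n]; [move: (Pos2Nat.is_pos p); rewrite e => /Nat.lt_irrefl | exact: (free_torsionfree hfree)].
    move/ginv_eq1.
    by case e: (Pos.to_nat p) => [|n]; [move: (Pos2Nat.is_pos p); rewrite e => /Nat.lt_irrefl | exact: (free_torsionfree hfree)].
  split; last by move=> h; have [g eg] := hs h; exists g => phi _; rewrite eg.
  move=> x y hxy' phi hphi.
  have [phi' [hphi' e]] := factor hf hs hphi (fun z hz => ker z hz phi hphi).
  by rewrite -!e; exact: hxy' phi' hphi'.
Qed.
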